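(* Let $G$ be a Hausdorff topological group and $H$ an extremely amenable closed subgroup of $G$ of finite index. Then $H$ is a normal clopen subgroup of $G$, and $M(G)$ is isomorphic (as a $G$-flow) to the action of $G$ on $G/H$ by left multiplication.
   Context: A $G$-flow is a continuous action of $G$ on a compact Hausdorff space; $M(G)$ denotes the universal minimal $G$-flow (the minimal $G$-flow admitting a continuous $G$-equivariant map onto every minimal $G$-flow, unique up to isomorphism). A topological group $H$ is extremely amenable if every $H$-flow has a fixed point (equivalently $|M(H)|=1$). *)

(* Defs.v *)
From Stdlib Require Import List Classical ProofIrrelevance.
Import ListNotations.
Set Implicit Arguments.

Definition is_topology (X : Type) (op : (X -> Prop) -> Prop) : Prop :=
  op (fun _ => True) /\
  (forall U V, op U -> op V -> op (fun x => U x /\ V x)) /\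
  (forall F : (X -> Prop) -> Prop, (forall U, F U -> op U) ->
     op (fun x => exists U, F U /\ U x)).

Definition is_closed (X : Type) (op : (X -> Prop) -> Prop) (C : X -> Prop) : Prop :=
  op (fun x => ~ C x).

Definition hausdorff (X : Type) (op : (X -> Prop) -> Prop) : Prop :=
  forall x y : X, x <> y -> exists U V, op U /\ op V /\ U x /\ V y /\
     (forall z, U z -> V z -> False).

Definition compact (X : Type) (op : (X -> Prop) -> Prop) : Prop :=
  forall F : (X -> Prop) -> Prop, (forall U, F U -> op U) ->
    (forall x, exists U, F U /\ U x) ->
    exists l : list (X -> Prop), (forall U, In U l -> F U) /\
      (forall x, exists U, In U l /\ U x).

Definition continuous (X Y : Type) (opX : (X -> Prop) -> Prop)
  (opY : (Y -> Prop) -> Prop) (f : X -> Y) : Prop :=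
  forall U, opY U -> opX (fun x => U (f x)).

Record TopGroup := {
  tg_carrier :> Type;
  tg_open : (tg_carrier -> Prop) -> Prop;
  tg_mul : tg_carrier -> tg_carrier -> tg_carrier;
  tg_inv : tg_carrier -> tg_carrier;
  tg_one : tg_carrier;
  tg_topology : is_topology tg_open;
  tg_mulA : forall a b c, tg_mul a (tg_mul b c) = tg_mul (tg_mul a b) c;
  tg_mul1g : forall a, tg_mul tg_one a = a;
  tg_mulg1 : forall a, tg_mul a tg_one = a;
  tg_mulVg : forall a, tg_mul (tg_inv a) a = tg_one;
  tg_mulgV : forall a, tg_mul a (tg_inv a) = tg_one;
  tg_mul_cont : forall x y U, tg_open U -> U (tg_mul x y) ->
     exists V W, tg_open V /\ tg_open W /\ V x /\ W y /\
       (forall a b, V a -> W b -> U (tg_mul a b));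
  tg_inv_cont : forall x U, tg_open U -> U (tg_inv x) ->
     exists V, tg_open V /\ V x /\ (forall a, V a -> U (tg_inv a))
}.

Arguments tg_open {_}.
Arguments tg_mul {_}.
Arguments tg_inv {_}.
Arguments tg_one {_}.

Definition is_subgroup (G : TopGroup) (H : G -> Prop) : Prop :=
  H tg_one /\ (forall a b, H a -> H b -> H (tg_mul a b)) /\
  (forall a, H a -> H (tg_inv a)).

Definition normal_subgroup (G : TopGroup) (H : G -> Prop) : Prop :=
  forall g h, H h -> H (tg_mul (tg_mul g h) (tg_inv g)).

Definition finite_index (G : TopGroup) (H : G -> Prop) : Prop :=
  exists l : list G, forall g, exists a, In a l /\ H (tg_mul (tg_inv a) g).

Section Sub.
Variables (G : TopGroup) (H : G -> Prop) (HH : is_subgroup G H).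

Definition sub_carrier := {g : G | H g}.

Definition sub_open (V : sub_carrier -> Prop) : Prop :=
  exists U, tg_open U /\ forall x, V x <-> U (proj1_sig x).

Definition sub_mul (x y : sub_carrier) : sub_carrier :=
  exist _ (tg_mul (proj1_sig x) (proj1_sig y))
    (proj1 (proj2 HH) _ _ (proj2_sig x) (proj2_sig y)).
Definition sub_inv (x : sub_carrier) : sub_carrier :=
  exist _ (tg_inv (proj1_sig x)) (proj2 (proj2 HH) _ (proj2_sig x)).
Definition sub_one : sub_carrier := exist _ tg_one (proj1 HH).

Lemma sub_eq (x y : sub_carrier) : proj1_sig x = proj1_sig y -> x = y.
Proof.
  destruct x as [x px], y as [y py]; simpl; intros e; subst y.
  rewrite (proof_irrelevance _ px py); reflexivity.
Qed.

Lemma sub_topology : is_topology sub_open.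
Proof.
  destruct (tg_topology G) as [Tfull [Tint Tuni]].
  split; [|split].
  - exists (fun _ => True); split; [exact Tfull| tauto].
  - intros V W [U1 [o1 e1]] [U2 [o2 e2]].
    exists (fun x => U1 x /\ U2 x); split; [now apply Tint|].
    intros x; rewrite e1, e2; tauto.
  - intros F hF.
    exists (fun g => exists U', (exists V, F V /\ tg_open U' /\
                 forall x, V x <-> U' (proj1_sig x)) /\ U' g).
    split.
    + apply Tuni. intros U' [V [_ [o _]]]; exact o.
    + intros x; split.
      * intros [V [FV Vx]]. destruct (hF V FV) as [U' [o e]].
        exists U'; split; [exists V; auto| now apply e].
      * intros [U' [[V [FV [o e]]] Ux]]. exists V; split; auto; now apply e.
Qed.

Definition subTopGroup : TopGroup.
Proof.
  refine {| tg_carrier := sub_carrier; tg_open := sub_open;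
            tg_mul := sub_mul; tg_inv := sub_inv; tg_one := sub_one;
            tg_topology := sub_topology |}.
  - intros; apply sub_eq; simpl; apply tg_mulA.
  - intros; apply sub_eq; simpl; apply tg_mul1g.
  - intros; apply sub_eq; simpl; apply tg_mulg1.
  - intros; apply sub_eq; simpl; apply tg_mulVg.
  - intros; apply sub_eq; simpl; apply tg_mulgV.
  - intros x y V [U [o e]] Vxy. apply e in Vxy. simpl in Vxy.
    destruct (tg_mul_cont G _ _ _ o Vxy) as [V1 [W1 [o1 [o2 [h1 [h2 h]]]]]].
    exists (fun a : sub_carrier => V1 (proj1_sig a)),
           (fun a : sub_carrier => W1 (proj1_sig a)).
    split; [exists V1; split; [exact o1| tauto]|].
    split; [exists W1; split; [exact o2| tauto]|].
    split; [exact h1|]; split; [exact h2|].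
    intros a b ha hb; apply e; simpl; now apply h.
  - intros x V [U [o e]] Vx. apply e in Vx. simpl in Vx.
    destruct (tg_inv_cont G _ _ o Vx) as [V1 [o1 [h1 h]]].
    exists (fun a : sub_carrier => V1 (proj1_sig a)).
    split; [exists V1; split; [exact o1| tauto]|].
    split; [exact h1|]. intros a ha; apply e; simpl; now apply h.
Defined.

End Sub.

Definition is_flow (G : TopGroup) (X : Type) (opX : (X -> Prop) -> Prop)
  (act : G -> X -> X) : Prop :=
  is_topology opX /\ compact opX /\ hausdorff opX /\
  (forall x, act tg_one x = x) /\
  (forall g h x, act (tg_mul g h) x = act g (act h x)) /\
  (forall g x U, opX U -> U (act g x) ->
     exists V W, tg_open V /\ opX W /\ V g /\ W x /\
       (forall a b, V a -> W b -> U (act a b))).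

Definition minimal_flow (G : TopGroup) (X : Type) (opX : (X -> Prop) -> Prop)
  (act : G -> X -> X) : Prop :=
  is_flow G opX act /\ inhabited X /\
  (forall C : X -> Prop, is_closed opX C -> (exists x, C x) ->
     (forall g x, C x -> C (act g x)) -> forall x, C x).

Definition flow_map (G : TopGroup) (X Y : Type) (opX : (X -> Prop) -> Prop)
  (actX : G -> X -> X) (opY : (Y -> Prop) -> Prop) (actY : G -> Y -> Y)
  (f : X -> Y) : Prop :=
  continuous opX opY f /\ forall g x, f (actX g x) = actY g (f x).

Definition universal_minimal_flow (G : TopGroup) (X : Type)
  (opX : (X -> Prop) -> Prop) (actX : G -> X -> X) : Prop :=
  minimal_flow G opX actX /\
  forall (Y : Type) (opY : (Y -> Prop) -> Prop) (actY : G -> Y -> Y),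
    minimal_flow G opY actY ->
    exists f : X -> Y, flow_map G opX actX opY actY f /\
      (forall y, exists x, f x = y).

Definition flow_iso (G : TopGroup) (X Y : Type) (opX : (X -> Prop) -> Prop)
  (actX : G -> X -> X) (opY : (Y -> Prop) -> Prop) (actY : G -> Y -> Y) : Prop :=
  exists (f : X -> Y) (f' : Y -> X),
    flow_map G opX actX opY actY f /\ continuous opY opX f' /\
    (forall x, f' (f x) = x) /\ (forall y, f (f' y) = y).

Definition extremely_amenable (G : TopGroup) : Prop :=
  forall (X : Type) (opX : (X -> Prop) -> Prop) (act : G -> X -> X),
    is_flow G opX act -> inhabited X -> exists x, forall g, act g x = x.

Section Cosets.
Variables (G : TopGroup) (H : G -> Prop).

(* a left coset aH, represented as a subset of G *)
Definition coset_space :=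
  {S : G -> Prop | exists a : G, forall y, S y <-> H (tg_mul (tg_inv a) y)}.

Definition coset_of (g : G) : coset_space :=
  exist _ (fun y => H (tg_mul (tg_inv g) y)) (ex_intro _ g (fun y => iff_refl _)).

Definition coset_open (U : coset_space -> Prop) : Prop :=
  tg_open (fun g => U (coset_of g)).

Lemma inv_mul (a b : G) : tg_inv (tg_mul a b) = tg_mul (tg_inv b) (tg_inv a).
Proof.
  assert (E : tg_mul (tg_mul a b) (tg_mul (tg_inv b) (tg_inv a)) = tg_one).
  { rewrite tg_mulA, <- (tg_mulA _ a b), tg_mulgV, tg_mulg1, tg_mulgV. reflexivity. }
  rewrite <- (tg_mul1g G (tg_mul (tg_inv b) (tg_inv a))).
  rewrite <- (tg_mulVg G (tg_mul a b)), <- tg_mulA, E, tg_mulg1. reflexivity.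
Qed.

Definition coset_act (g : G) (S : coset_space) : coset_space.
Proof.
  refine (exist _ (fun y => proj1_sig S (tg_mul (tg_inv g) y)) _).
  destruct (proj2_sig S) as [a Ha].
  exists (tg_mul g a). intros y. rewrite Ha, inv_mul, tg_mulA. reflexivity.
Defined.

End Cosets.

(* Main.v *)
Require Import Defs.
From Stdlib Require Import List Classical ClassicalEpsilon FunctionalExtensionality PropExtensionality ProofIrrelevance.
Import ListNotations.

Lemma op_ext (X : Type) (op : (X -> Prop) -> Prop) (U V : X -> Prop) :
  op U -> (forall x, U x <-> V x) -> op V.
Proof.
  intros o e. replace V with U; auto.
  apply functional_extensionality; intros x; apply propositional_extensionality; auto.
Qed.

Lemma sig_eq (A : Type) (P : A -> Prop) (x y : sig P) : proj1_sig x = proj1_sig y -> x = y.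
Proof.
  destruct x as [x px], y as [y py]; simpl; intros e; subst y.
  rewrite (proof_irrelevance _ px py); reflexivity.
Qed.

Section GL.
Variable G : TopGroup.
Implicit Types a b c : G.

Lemma mulKg a b : tg_mul (tg_inv a) (tg_mul a b) = b.
Proof. rewrite tg_mulA, tg_mulVg, tg_mul1g; reflexivity. Qed.
Lemma mulgK a b : tg_mul (tg_mul b a) (tg_inv a) = b.
Proof. rewrite <- tg_mulA, tg_mulgV, tg_mulg1; reflexivity. Qed.
Lemma mulgVK a b : tg_mul (tg_mul b (tg_inv a)) a = b.
Proof. rewrite <- tg_mulA, tg_mulVg, tg_mulg1; reflexivity. Qed.
Lemma invK a : tg_inv (tg_inv a) = a.
Proof.
  rewrite <- (tg_mulg1 G (tg_inv (tg_inv a))), <- (tg_mulVg G a), tg_mulA,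
    tg_mulVg, tg_mul1g; reflexivity.
Qed.
Lemma inv1 : tg_inv (@tg_one G) = tg_one.
Proof. rewrite <- (tg_mul1g G (tg_inv tg_one)), tg_mulgV; reflexivity. Qed.
End GL.

Ltac gsimpl := repeat first [ rewrite inv_mul | rewrite invK | rewrite inv1 | rewrite tg_mulA
  | rewrite tg_mulgV | rewrite tg_mulVg | rewrite tg_mul1g | rewrite tg_mulg1
  | rewrite mulgK | rewrite mulgVK ].

Section Top.
Variable G : TopGroup.

Lemma left_open (c : G) U : tg_open U -> tg_open (fun g => U (tg_mul c g)).
Proof.
  intros o. destruct (tg_topology G) as [_ [_ Tuni]].
  set (F := fun W : G -> Prop => tg_open W /\ forall b, W b -> U (tg_mul c b)).
  eapply op_ext. apply (Tuni F). intros W [h _]; exact h.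
  intros g; simpl; split.
  - intros [W [[_ h] Wg]]; auto.
  - intros Ug. destruct (tg_mul_cont G _ _ _ o Ug) as [V [W [oV [oW [Vc [Wg h]]]]]].
    exists W; split; [split; auto|auto].
Qed.

Lemma right_open (c : G) U : tg_open U -> tg_open (fun g => U (tg_mul g c)).
Proof.
  intros o. destruct (tg_topology G) as [_ [_ Tuni]].
  set (F := fun W : G -> Prop => tg_open W /\ forall b, W b -> U (tg_mul b c)).
  eapply op_ext. apply (Tuni F). intros W [h _]; exact h.
  intros g; simpl; split.
  - intros [W [[_ h] Wg]]; auto.
  - intros Ug. destruct (tg_mul_cont G _ _ _ o Ug) as [V [W [oV [oW [Vg [Wc h]]]]]].
    exists V; split; [split; auto|auto].
Qed.
End Top.

Lemma finite_inter (X A : Type) (op : (X -> Prop) -> Prop) (T : is_topology op)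
  (l : list A) (P : A -> X -> Prop) :
  (forall a, In a l -> op (P a)) -> op (fun x => forall a, In a l -> P a x).
Proof.
  destruct T as [Tf [Ti _]].
  induction l as [|a l IH]; intros h.
  - eapply op_ext; [exact Tf|]. simpl; tauto.
  - eapply op_ext. apply (Ti (P a) (fun x => forall b, In b l -> P b x)).
    apply h; simpl; auto. apply IH; intros; apply h; simpl; auto.
    intros x; simpl; split.
    + intros [h1 h2] b [<-|hb]; auto.
    + intros h1; split; auto.
Qed.

Lemma point_compl_open (X : Type) (op : (X -> Prop) -> Prop) (T : is_topology op)
  (Hs : hausdorff op) (p : X) : op (fun z => p <> z).
Proof.
  destruct T as [_ [_ Tuni]].
  set (F := fun U : X -> Prop => op U /\ forall z, U z -> p <> z).
  eapply op_ext. apply (Tuni F). intros W [h _]; exact h.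
  intros z; simpl; split.
  - intros [W [[_ h] Wz]]; auto.
  - intros nz. destruct (Hs p z nz) as [U [V [oU [oV [Up [Vz d]]]]]].
    exists V; split; [split; auto|auto].
    intros w Vw e; subst w; exact (d p Up Vw).
Qed.

Lemma compact_sub_aux (X : Type) (F : (X -> Prop) -> Prop)
  (hcov : forall x, exists U, F U /\ U x) (L : list (X -> Prop)) :
  (forall S, In S L -> forall x y, S x -> S y -> x = y) ->
  exists l, (forall U, In U l -> F U) /\
     (forall x, (exists S, In S L /\ S x) -> exists U, In U l /\ U x).
Proof.
  induction L as [|S L IH]; intros hs.
  - exists []; split; [simpl; tauto|]. intros x [S [[] _]].
  - destruct IH as [l [h1 h2]]. intros; eapply hs; eauto; simpl; auto.
    destruct (classic (exists x, S x)) as [[x0 Sx0]|nS].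
    + destruct (hcov x0) as [U [FU Ux0]].
      exists (U :: l); split.
      * intros V [<-|hV]; auto.
      * intros x [S' [[<-|hS'] S'x]].
        -- exists U; split; [simpl; auto|]. rewrite (hs S (or_introl eq_refl) x x0); auto.
        -- destruct (h2 x) as [V [hV Vx]]; eauto. exists V; simpl; auto.
    + exists l; split; auto.
      intros x [S' [[<-|hS'] S'x]]. exfalso; eauto. eauto.
Qed.

Lemma compact_sub (X : Type) (op : (X -> Prop) -> Prop) (L : list (X -> Prop)) :
  (forall S, In S L -> forall x y, S x -> S y -> x = y) ->
  (forall x, exists S, In S L /\ S x) -> compact op.
Proof.
  intros hs hc F _ hcov.
  destruct (@compact_sub_aux X F hcov L hs) as [l [h1 h2]].
  exists l; split; auto.
Qed.

Section Cos.
Variables (G : TopGroup) (H : G -> Prop) (HH : is_subgroup G H).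

Let H1 : H tg_one := proj1 HH.
Let HM : forall a b, H a -> H b -> H (tg_mul a b) := proj1 (proj2 HH).
Let HV : forall a, H a -> H (tg_inv a) := proj2 (proj2 HH).

Lemma coset_of_eq (x y : G) : H (tg_mul (tg_inv x) y) -> coset_of G H x = coset_of G H y.
Proof.
  intros h. apply sig_eq; simpl. apply functional_extensionality; intros z.
  apply propositional_extensionality; split; intros hz.
  - replace (tg_mul (tg_inv y) z) with (tg_mul (tg_inv (tg_mul (tg_inv x) y)) (tg_mul (tg_inv x) z))
      by (gsimpl; reflexivity). auto.
  - replace (tg_mul (tg_inv x) z) with (tg_mul (tg_mul (tg_inv x) y) (tg_mul (tg_inv y) z))
      by (gsimpl; reflexivity). auto.
Qed.

Lemma coset_of_eq_inv (x y : G) : coset_of G H x = coset_of G H y -> H (tg_mul (tg_inv x) y).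
Proof.
  intros e. apply (f_equal (@proj1_sig _ _)) in e. simpl in e.
  apply (f_equal (fun f => f y)) in e. simpl in e. rewrite e, tg_mulVg; exact H1.
Qed.

Definition rep (S : coset_space G H) : G :=
  proj1_sig (constructive_indefinite_description _ (proj2_sig S)).

Lemma rep_spec S y : proj1_sig S y <-> H (tg_mul (tg_inv (rep S)) y).
Proof. unfold rep. destruct (constructive_indefinite_description _ _) as [a ha]; simpl; auto. Qed.

Lemma coset_rep S : S = coset_of G H (rep S).
Proof.
  apply sig_eq; simpl. apply functional_extensionality; intros z.
  apply propositional_extensionality; apply rep_spec.
Qed.

Lemma coset_act_of a c : @coset_act G H a (coset_of G H c) = coset_of G H (tg_mul a c).
Proof.
  apply sig_eq; simpl. apply functional_extensionality; intros z.
  rewrite inv_mul, tg_mulA; reflexivity.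
Qed.

Lemma coset_act1 S : @coset_act G H tg_one S = S.
Proof. rewrite (coset_rep S), coset_act_of, tg_mul1g; reflexivity. Qed.

Lemma coset_actM g h S : @coset_act G H (tg_mul g h) S = @coset_act G H g (@coset_act G H h S).
Proof. rewrite (coset_rep S), !coset_act_of, tg_mulA; reflexivity. Qed.

Hypothesis Hopen : tg_open H.

Lemma coset_all_open U : @coset_open G H U.
Proof.
  unfold coset_open; simpl. destruct (tg_topology G) as [_ [_ Tuni]].
  set (F := fun W : G -> Prop => exists a, U (coset_of G H a) /\ W = (fun g => H (tg_mul (tg_inv a) g))).
  eapply op_ext. apply (Tuni F).
  - intros W [a [_ ->]]. apply left_open; auto.
  - intros g; split.
    + intros [W [[a [Ua ->]] Wg]]. rewrite <- (coset_of_eq _ _ Wg); auto.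
    + intros Ug. exists (fun y => H (tg_mul (tg_inv g) y)); split.
      exists g; auto. rewrite tg_mulVg; auto.
Qed.

End Cos.

Section Op.
Variables (G : TopGroup) (H : G -> Prop) (HH : is_subgroup G H).

Let H1 : H tg_one := proj1 HH.
Let HM : forall a b, H a -> H b -> H (tg_mul a b) := proj1 (proj2 HH).
Let HV : forall a, H a -> H (tg_inv a) := proj2 (proj2 HH).

Lemma H_open : is_closed (@tg_open G) H -> finite_index G H -> tg_open H.
Proof.
  intros hc [l hl].
  eapply op_ext.
  apply (finite_inter _ _ _ (tg_topology G) l (fun a g => ~ H a -> ~ H (tg_mul (tg_inv a) g))).
  - intros a _. destruct (classic (H a)) as [ha|na].
    + eapply op_ext. apply (proj1 (tg_topology G)). simpl; tauto.
    + eapply op_ext. apply (left_open G (tg_inv a) _ hc). simpl; tauto.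
  - intros g; split.
    + intros h. apply NNPP; intros ng. destruct (hl g) as [a [ia ha]].
      apply (h a ia); auto. intros Ha. apply ng.
      replace g with (tg_mul a (tg_mul (tg_inv a) g)) by (gsimpl; reflexivity). auto.
    + intros hg a _ na ha. apply na.
      replace a with (tg_mul g (tg_inv (tg_mul (tg_inv a) g))) by (gsimpl; reflexivity). auto.
Qed.
End Op.

Section Norm.
Variables (G : TopGroup) (H : G -> Prop) (HH : is_subgroup G H).

Let H1 : H tg_one := proj1 HH.
Let HM : forall a b, H a -> H b -> H (tg_mul a b) := proj1 (proj2 HH).
Let HV : forall a, H a -> H (tg_inv a) := proj2 (proj2 HH).

Hypothesis Hopen : tg_open H.
Variable l : list G.
Hypothesis hl : forall g, exists a, In a l /\ H (tg_mul (tg_inv a) g).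

Variable b : G.
Definition orb := {S : coset_space G H | exists h, H h /\ S = coset_of G H (tg_mul h b)}.

Lemma orb_act_ok (x : sub_carrier G H) (S : orb) :
  exists h, H h /\ @coset_act G H (proj1_sig x) (proj1_sig S) = coset_of G H (tg_mul h b).
Proof.
  destruct S as [S [h [hh ->]]]; simpl. exists (tg_mul (proj1_sig x) h). split.
  apply HM; auto. exact (proj2_sig x).
  rewrite coset_act_of, tg_mulA; reflexivity.
Qed.

Definition orb_act (x : sub_carrier G H) (S : orb) : orb := exist _ _ (orb_act_ok x S).

Lemma orb_flow : is_flow (subTopGroup HH) (fun _ : orb -> Prop => True) orb_act.
Proof.
  split; [|split; [|split; [|split; [|split]]]].
  - split; [auto| split; auto].
  - apply (compact_sub _ _ (map (fun a => fun S : orb => proj1_sig S = coset_of G H a) l)).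
    + intros S hS x y. apply in_map_iff in hS. destruct hS as [a [<- _]].
      intros e1 e2. apply sig_eq. congruence.
    + intros [S [h [hh e]]]. destruct (hl (tg_mul h b)) as [a [ia ha]].
      exists (fun S : orb => proj1_sig S = coset_of G H a). split.
      apply in_map_iff; exists a; auto. simpl. rewrite e. symmetry; apply coset_of_eq; auto.
  - intros x y nxy. exists (fun z => z = x), (fun z => z = y). repeat split; auto.
    intros z -> ->; auto.
  - intros x. apply sig_eq; simpl. apply coset_act1.
  - intros g h x. apply sig_eq; simpl. apply coset_actM.
  - intros g x U _ Ux.
    set (c := rep G H (proj1_sig x)).
    exists (fun a => orb_act a x = orb_act g x), (fun z => z = x).
    split; [|split; [auto|split; [reflexivity|split; [reflexivity|]]]].
    + exists (fun a => H (tg_mul (tg_inv (tg_mul (proj1_sig g) c)) (tg_mul a c))).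
      split.
      * apply (right_open G c (fun y => H (tg_mul (tg_inv (tg_mul (proj1_sig g) c)) y))).
        apply left_open; auto.
      * intros a. split.
        -- intros e. apply (f_equal (@proj1_sig _ _)) in e. simpl in e.
           unfold c; rewrite (coset_rep G H (proj1_sig x)), !coset_act_of in e.
           apply coset_of_eq_inv; auto.
        -- intros h. apply sig_eq; simpl.
           rewrite (coset_rep G H (proj1_sig x)), !coset_act_of. fold c.
           symmetry. apply coset_of_eq; auto.
    + intros a z e ->. rewrite e; auto.
Qed.

End Norm.

Lemma H_normal (G : TopGroup) (H : G -> Prop) (HH : is_subgroup G H) (Hopen : tg_open H)
  (l : list G) (hl : forall g, exists a, In a l /\ H (tg_mul (tg_inv a) g)) :
  extremely_amenable (subTopGroup HH) -> normal_subgroup G H.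
Proof.
  intros EA.
  pose proof (proj1 HH) as H1; pose proof (proj1 (proj2 HH)) as HM; pose proof (proj2 (proj2 HH)) as HV.
  assert (key : forall b k, H k -> H (tg_mul (tg_mul (tg_inv b) k) b)).
  { intros b k hk.
    destruct (EA _ _ _ (orb_flow G H HH Hopen l hl b)) as [[S [h0 [hh0 e0]]] fix0].
    { constructor. exists (coset_of G H b). exists tg_one; split; auto. rewrite tg_mul1g; auto. }
    assert (hx : H (tg_mul (tg_mul h0 k) (tg_inv h0))) by auto.
    specialize (fix0 (exist _ _ hx)).
    apply (f_equal (@proj1_sig _ _)) in fix0. simpl in fix0.
    rewrite e0, coset_act_of in fix0. symmetry in fix0.
    apply coset_of_eq_inv in fix0; auto.
    revert fix0. gsimpl. auto. }
  intros g h hh. specialize (key (tg_inv g) h hh). rewrite invK in key. exact key.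
Qed.

Section UMF.
Variables (G : TopGroup) (H : G -> Prop) (HH : is_subgroup G H).

Let H1 : H tg_one := proj1 HH.
Let HM : forall a b, H a -> H b -> H (tg_mul a b) := proj1 (proj2 HH).
Let HV : forall a, H a -> H (tg_inv a) := proj2 (proj2 HH).

Hypothesis Hopen : tg_open H.
Variable l : list G.
Hypothesis hl : forall g, exists a, In a l /\ H (tg_mul (tg_inv a) g).

Notation cop := (@coset_open G H).
Notation cact := (@coset_act G H).

Lemma cos_flow : is_flow G cop cact.
Proof.
  split; [|split; [|split; [|split; [|split]]]].
  - split; [|split]; intros; apply coset_all_open; auto.
  - apply (compact_sub _ _ (map (fun a => fun S => S = coset_of G H a) l)).
    + intros S hS x y. apply in_map_iff in hS. destruct hS as [a [<- _]]. congruence.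
    + intros S. destruct (hl (rep G H S)) as [a [ia ha]].
      exists (fun S => S = coset_of G H a). split.
      apply in_map_iff; exists a; auto. rewrite (coset_rep G H S) at 1.
      symmetry; apply coset_of_eq; auto.
  - intros x y nxy. exists (fun z => z = x), (fun z => z = y).
    split; [apply coset_all_open; auto|]. split; [apply coset_all_open; auto|].
    repeat split; auto. intros z -> ->; auto.
  - apply coset_act1.
  - apply coset_actM.
  - intros g x U oU Ux.
    set (c := rep G H x).
    exists (fun a => U (cact a x)), (fun z => z = x).
    split; [|split; [apply coset_all_open; auto|split; [auto|split; [reflexivity|]]]].
    + eapply op_ext. apply (right_open G c _ oU). intros a; simpl.
      unfold c; rewrite (coset_rep G H x) at 2. rewrite coset_act_of. tauto.
    + intros a z h ->; auto.
Qed.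

Lemma cos_minimal : minimal_flow G cop cact.
Proof.
  split; [exact cos_flow|split].
  - constructor; exact (coset_of G H tg_one).
  - intros C _ [x0 Cx0] inv x.
    specialize (inv (tg_mul (rep G H x) (tg_inv (rep G H x0))) x0 Cx0).
    rewrite (coset_rep G H x0) in inv at 2. rewrite coset_act_of, mulgVK in inv.
    rewrite (coset_rep G H x); exact inv.
Qed.

Lemma flow_restrict (Y : Type) opY (act : G -> Y -> Y) :
  is_flow G opY act -> is_flow (subTopGroup HH) opY (fun x y => act (proj1_sig x) y).
Proof.
  intros [T [C [Hs [a1 [aM ac]]]]].
  split; [auto|split; [auto|split; [auto|split; [|split]]]].
  - intros x; apply a1.
  - intros g h x; apply aM.
  - intros g x U oU Ux. destruct (ac _ _ _ oU Ux) as [V [W [oV [oW [Vg [Wx h]]]]]].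
    exists (fun a : sub_carrier G H => V (proj1_sig a)), W.
    split; [|split; [auto|split; [auto|split; [auto|]]]].
    + exists V; split; [auto| tauto].
    + intros a b0 ha hb; apply h; auto.
Qed.

Hypothesis EA : extremely_amenable (subTopGroup HH).

Lemma cos_universal : universal_minimal_flow G cop cact.
Proof.
  split; [exact cos_minimal|].
  intros Y opY actY [fl [[y1] mn]].
  destruct (EA _ _ _ (flow_restrict _ _ _ fl) (inhabits y1)) as [y0 fix0].
  destruct fl as [T [_ [Hs [a1 [aM ac]]]]].
  assert (fx : forall b c, H (tg_mul (tg_inv b) c) -> actY b y0 = actY c y0).
  { intros b c hbc.
    replace c with (tg_mul b (tg_mul (tg_inv b) c)) by (gsimpl; reflexivity).
    rewrite aM. f_equal. symmetry. exact (fix0 (exist _ _ hbc)). }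
  set (f := fun S => actY (rep G H S) y0).
  assert (fof : forall c, f (coset_of G H c) = actY c y0).
  { intros c. apply fx. apply coset_of_eq_inv; auto. rewrite <- coset_rep; reflexivity. }
  assert (feq : forall g S, f (cact g S) = actY g (f S)).
  { intros g S. rewrite (coset_rep G H S), coset_act_of, !fof, aM; reflexivity. }
  exists f. split; [split|].
  - intros U _; apply coset_all_open; auto.
  - exact feq.
  - set (C := fun y => exists S, f S = y).
    assert (CC : is_closed opY C).
    { unfold is_closed. eapply op_ext.
      apply (finite_inter _ _ _ T l (fun a z => actY a y0 <> z)).
      intros a _; apply point_compl_open; auto.
      intros y; split.
      - intros h [S e]. destruct (hl (rep G H S)) as [a [ia ha]].
        apply (h a ia). rewrite <- e. unfold f. apply fx; auto.
      - intros h a _ e. apply h. exists (coset_of G H a). rewrite fof; auto. }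
    apply (mn C CC).
    + exists (f (coset_of G H tg_one)), (coset_of G H tg_one); auto.
    + intros g x [S <-]. exists (cact g S); auto.
Qed.

Hypothesis Hnorm : normal_subgroup G H.

Lemma cos_unique (M : Type) (opM : (M -> Prop) -> Prop) (actM : G -> M -> M) :
  universal_minimal_flow G opM actM -> flow_iso G opM actM cop cact.
Proof.
  intros [mM uM].
  destruct (uM _ _ _ cos_minimal) as [f [[fc feq] fs]].
  destruct (proj2 cos_universal _ _ _ mM) as [p [[pc peq] ps]].
  set (psi := fun S => f (p S)).
  assert (pseq : forall g S, psi (cact g S) = cact g (psi S)).
  { intros g S; unfold psi; rewrite peq, feq; reflexivity. }
  set (t := rep G H (psi (coset_of G H tg_one))).
  assert (pof : forall c, psi (coset_of G H c) = coset_of G H (tg_mul c t)).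
  { intros c. replace (coset_of G H c) with (cact c (coset_of G H tg_one))
      by (rewrite coset_act_of, tg_mulg1; reflexivity).
    rewrite pseq. unfold t. rewrite (coset_rep G H (psi (coset_of G H tg_one))) at 1.
    rewrite coset_act_of; reflexivity. }
  assert (pinj : forall S1 S2, psi S1 = psi S2 -> S1 = S2).
  { intros S1 S2 e. rewrite (coset_rep G H S1), (coset_rep G H S2) in *.
    rewrite !pof in e. apply coset_of_eq_inv in e; auto. apply coset_of_eq; auto.
    apply (Hnorm t) in e. revert e. gsimpl. auto. }
  assert (psurj : forall S, exists T, psi T = S).
  { intros S. exists (coset_of G H (tg_mul (rep G H S) (tg_inv t))).
    rewrite pof, mulgVK, <- coset_rep; reflexivity. }
  set (inv := fun S => proj1_sig (constructive_indefinite_description _ (psurj S))).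
  assert (invK : forall S, psi (inv S) = S).
  { intros S; unfold inv; destruct (constructive_indefinite_description _ _); auto. }
  exists f, (fun S => p (inv S)). split; [split; auto|split; [|split]].
  - intros U _; apply coset_all_open; auto.
  - intros m. destruct (ps m) as [T <-]. f_equal. apply pinj. rewrite invK; reflexivity.
  - intros S. apply invK.
Qed.

End UMF.

Theorem mainTheorem6 (G : TopGroup) (H : G -> Prop) (HH : is_subgroup G H) :
  hausdorff (@tg_open G) ->
  is_closed (@tg_open G) H ->
  finite_index G H ->
  extremely_amenable (@subTopGroup G H HH) ->
  normal_subgroup G H /\ tg_open H /\ is_closed (@tg_open G) H /\
  universal_minimal_flow G (@coset_open G H) (@coset_act G H) /\
  (forall (M : Type) (opM : (M -> Prop) -> Prop) (actM : G -> M -> M),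
     universal_minimal_flow G opM actM ->
     flow_iso G opM actM (@coset_open G H) (@coset_act G H)).
Proof.
  intros _ hc hfi EA.
  assert (Ho : tg_open H) by (apply (H_open G H HH); auto).
  destruct hfi as [l hl].
  assert (Hn : normal_subgroup G H) by (apply (H_normal G H HH Ho l hl); auto).
  split; [auto|split; [auto|split; [auto|split]]].
  - apply (cos_universal G H HH Ho l hl EA).
  - intros M opM actM u. apply (cos_unique G H HH Ho l hl EA Hn); auto.
Qed.
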